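(* Let $H=(a_1,a_2)$ be a bounded open interval in $\mathbb R$, $\mathcal B$ a finite index set, $m\ge2$. Assume for each $\beta\in\mathcal B$: $b_\beta,\theta_\beta\in C^m(\bar H)$, $b_\beta>0$ on $\bar H$, $\theta_\beta(H)\subset H$; and that there exist $\mu\ge1$ and $\kappa<1$ with $|\theta_\omega(x)-\theta_\omega(y)|\le\kappa|x-y|$ for all $\omega\in\mathcal B_\mu$, $x,y\in\bar H$. Assume also that $\theta_\beta'(u)\ge0$, $\theta_\beta''(u)\ge0$, $b_\beta'(u)\ge0$, $b_\beta''(u)\ge0$ and $$b_\beta''(u)b_\beta(u)-(1-s)[b_\beta'(u)]^2\ge0$$ for all $\beta\in\mathcal B$, all $u\in H$, and a given real number $s$. If $s>0$ and $v_s$ is the strictly positive $C^m$ eigenvector of $(L_sf)(x)=\sum_{\beta\in\mathcal B}[b_\beta(x)]^sf(\theta_\beta(x))$ on $C^m(\bar H)$, then $Dv_s(u)\ge0$ and $D^2v_s(u)\ge0$ for all $u\in\bar H$. If in addition there is a set $F\subset\bar H$ (possibly empty) such that for all $u\in\bar H\setminus F$ and all $\beta\in\mathcal B$, $b_\beta'(u)>0$ and $b_\beta''(u)b_\beta(u)-(1-s)[b_\beta'(u)]^2>0$, then $Dv_s(u)>0$ and $D^2v_s(u)>0$ for all $u\in\bar H\setminus F$.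
   Context: $D=d/dx$. $\mathcal B_\mu=\{(j_1,\ldots,j_\mu):j_k\in\mathcal B\}$ and $\theta_{(j_1,\ldots,j_\mu)}=\theta_{j_\mu}\circ\cdots\circ\theta_{j_1}$. Under the hypotheses, $L_s$ on $C^m(\bar H)$ has a strictly positive $C^m$ eigenvector with eigenvalue $r(L_s)$, unique up to positive multiples. *)

(* Defs.v *)
From Stdlib Require Import Reals List.
From Coquelicot Require Import Coquelicot.
Import ListNotations.
Open Scope R_scope.

Definition Cm (m : nat) (f : R -> R) : Prop :=
  (forall k x, (k < m)%nat -> ex_derive (Derive_n f k) x) /\
  (forall x, continuous (Derive_n f m) x).

(* theta_(j_1,...,j_mu) = theta_{j_mu} o ... o theta_{j_1} *)
Definition theta_comp (theta : nat -> R -> R) (w : list nat) (x : R) : R :=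
  fold_left (fun y j => theta j y) w x.

Definition Lop (N : nat) (b theta : nat -> R -> R) (s : R) (f : R -> R) (x : R) : R :=
  fold_right (fun beta acc => Rpower (b beta x) s * f (theta beta x) + acc) 0 (seq 0 N).

(* Main.v *)
Require Import Defs.
From Stdlib Require Import Reals List Lra Lia Psatz.
From Coquelicot Require Import Coquelicot.
Import ListNotations.
Open Scope R_scope.

Definition lsum {A} (l : list A) (g : A -> R) : R :=
  fold_right (fun a acc => g a + acc) 0 l.

Lemma lsum_app {A} (l1 l2 : list A) g : lsum (l1 ++ l2) g = lsum l1 g + lsum l2 g.
Proof. induction l1; simpl; [lra|rewrite IHl1; lra]. Qed.

Lemma lsum_map {A B} (f : A -> B) l g : lsum (map f l) g = lsum l (fun a => g (f a)).
Proof. induction l; simpl; [lra|rewrite IHl; lra]. Qed.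

Lemma lsum_flat_map {A B} (F : A -> list B) l g :
  lsum (flat_map F l) g = lsum l (fun a => lsum (F a) g).
Proof. induction l; simpl; [lra|rewrite lsum_app, IHl; lra]. Qed.

Lemma lsum_scal {A} (l : list A) c g : c * lsum l g = lsum l (fun a => c * g a).
Proof. induction l; simpl; [lra|rewrite <- IHl; lra]. Qed.

Lemma lsum_le {A} (l : list A) g h : (forall a, In a l -> g a <= h a) -> lsum l g <= lsum l h.
Proof. induction l; simpl; intros H; [lra|].
  assert (g a <= h a) by auto. assert (lsum l g <= lsum l h) by auto. lra. Qed.

Lemma lsum_ext {A} (l : list A) g h : (forall a, In a l -> g a = h a) -> lsum l g = lsum l h.
Proof. induction l; simpl; intros H; [lra|].
  rewrite H by auto. rewrite IHl by auto. lra. Qed.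

Lemma lsum_nonneg {A} (l : list A) g : (forall a, In a l -> 0 <= g a) -> 0 <= lsum l g.
Proof. induction l; simpl; intros H; [lra|].
  assert (0 <= g a) by auto. assert (0 <= lsum l g) by auto. lra. Qed.

Lemma lsum_zero {A} (l : list A) : lsum l (fun _ => 0) = 0.
Proof. induction l; simpl; lra. Qed.

Lemma lsum_pos {A} (l : list A) g : l <> [] -> (forall a, In a l -> 0 < g a) -> 0 < lsum l g.
Proof. destruct l as [|a l]; [congruence|]. intros _ H. simpl.
  assert (0 < g a) by (apply H; simpl; auto).
  assert (0 <= lsum l g) by (apply lsum_nonneg; intros; left; apply H; simpl; auto). lra. Qed.

Lemma is_derive_lsum {A} (l : list A) (g : A -> R -> R) (dg : A -> R) (x : R) :
  (forall a, In a l -> is_derive (g a) x (dg a)) ->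
  is_derive (fun y => lsum l (fun a => g a y)) x (lsum l dg).
Proof. induction l; simpl; intros H.
  - exact (is_derive_const (K:=R_AbsRing) 0 x).
  - apply (is_derive_plus (g a) (fun y => lsum l (fun a => g a y))); auto.
Qed.

Lemma near_step a1 a2 x d : a1 < a2 -> a1 <= x <= a2 -> 0 < d ->
  exists h, h <> 0 /\ Rabs h < d /\ a1 < x + h < a2.
Proof. intros Ha Hx Hd. set (e := Rmin d (a2 - a1) / 4).
  assert (0 < e) by (unfold e; assert (0 < Rmin d (a2-a1)) by (apply Rmin_pos; lra); lra).
  assert (e <= d/4) by (unfold e; pose proof (Rmin_l d (a2-a1)); lra).
  assert (e <= (a2-a1)/4) by (unfold e; pose proof (Rmin_r d (a2-a1)); lra).
  destruct (Rle_dec x ((a1+a2)/2)).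
  - exists e. split; [lra|]. rewrite Rabs_right by lra. lra.
  - exists (-e). split; [lra|]. rewrite Rabs_left by lra. lra.
Qed.

Lemma closure_ge a1 a2 f x K : a1 < a2 -> a1 <= x <= a2 -> continuity_pt f x ->
  (forall y, a1 < y < a2 -> K <= f y) -> K <= f x.
Proof. intros Ha Hx Hc H. destruct (Rle_dec K (f x)) as [|Hn]; auto. exfalso.
  destruct (Hc (K - f x)) as [d [Hd Hd2]]; [lra|].
  destruct (near_step a1 a2 x d Ha Hx Hd) as [h [Hh0 [Hh1 Hh2]]].
  specialize (Hd2 (x+h)). simpl in Hd2. unfold R_dist in Hd2.
  assert (Hy := H (x+h) Hh2).
  assert (Rabs (f (x+h) - f x) < K - f x).
  { apply Hd2. split. - unfold D_x, no_cond. split; auto. lra.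
    - replace (x+h-x) with h by ring. auto. }
  apply Rabs_def2 in H0. lra.
Qed.

Lemma closure_le a1 a2 f x K : a1 < a2 -> a1 <= x <= a2 -> continuity_pt f x ->
  (forall y, a1 < y < a2 -> f y <= K) -> f x <= K.
Proof. intros Ha Hx Hc H.
  assert (-K <= - f x); [|lra].
  apply (closure_ge a1 a2 (fun y => - f y)); auto.
  - apply continuity_pt_opp; auto.
  - intros y Hy; specialize (H y Hy); lra.
Qed.

Lemma deriv_eq a1 a2 f g x l1 l2 : a1 < a2 -> a1 <= x <= a2 ->
  (forall y, a1 <= y <= a2 -> f y = g y) ->
  derivable_pt_lim f x l1 -> derivable_pt_lim g x l2 -> l1 = l2.
Proof. intros Ha Hx Heq H1 H2. destruct (Req_dec l1 l2) as [|Hn]; auto. exfalso.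
  assert (He : 0 < Rabs (l1 - l2) / 2) by (assert (l1 - l2 <> 0) by lra; pose proof (Rabs_pos_lt _ H); lra).
  destruct (H1 _ He) as [d1 Hd1]. destruct (H2 _ He) as [d2 Hd2].
  assert (0 < Rmin d1 d2) by (apply Rmin_pos; apply cond_pos).
  destruct (near_step a1 a2 x _ Ha Hx H) as [h [Hh0 [Hh1 Hh2]]].
  assert (Rabs h < d1) by (pose proof (Rmin_l d1 d2); lra).
  assert (Rabs h < d2) by (pose proof (Rmin_r d1 d2); lra).
  specialize (Hd1 h Hh0 H0). specialize (Hd2 h Hh0 H3).
  rewrite (Heq (x+h)) in Hd1 by lra. rewrite (Heq x) in Hd1 by lra.
  set (q := (g (x + h) - g x) / h) in *.
  pose proof (Rabs_triang (q - l2) (l1 - q)).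
  replace (q - l2 + (l1 - q)) with (l1 - l2) in H4 by ring.
  rewrite Rabs_minus_sym in Hd1. lra.
Qed.

Lemma deriv_lip a1 a2 f x l K : a1 < a2 -> a1 <= x <= a2 ->
  (forall y, a1 <= y <= a2 -> Rabs (f y - f x) <= K * Rabs (y - x)) ->
  derivable_pt_lim f x l -> Rabs l <= K.
Proof. intros Ha Hx Hl H1. destruct (Rle_dec (Rabs l) K) as [|Hn]; auto. exfalso.
  assert (He : 0 < Rabs l - K) by lra.
  destruct (H1 _ He) as [d Hd].
  destruct (near_step a1 a2 x _ Ha Hx (cond_pos d)) as [h [Hh0 [Hh1 Hh2]]].
  specialize (Hd h Hh0 Hh1). specialize (Hl (x+h)). replace (x+h-x) with h in Hl by ring.
  assert (Hq : Rabs ((f (x + h) - f x) / h) <= K).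
  { unfold Rdiv. rewrite Rabs_mult, Rabs_inv.
    assert (0 < Rabs h) by (apply Rabs_pos_lt; auto).
    apply (Rmult_le_reg_r (Rabs h)); auto. rewrite Rmult_assoc, Rinv_l by lra.
    rewrite Rmult_1_r. apply Hl; lra. }
  pose proof (Rabs_triang ((f (x + h) - f x) / h) (l - (f (x + h) - f x) / h)).
  replace ((f (x + h) - f x) / h + (l - (f (x + h) - f x) / h)) with l in H by ring.
  rewrite Rabs_minus_sym in Hd. lra.
Qed.


Fixpoint words (N k : nat) : list (list nat) :=
  match k with 0 => [[]] | S k => flat_map (fun j => map (cons j) (words N k)) (seq 0 N) end.

Fixpoint Wt (c : nat -> R -> R) (th : nat -> R -> R) (w : list nat) (x : R) : R :=
  match w with [] => 1 | j :: w' => c j x * Wt c th w' (th j x) end.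

Lemma words_in N k w : In w (words N k) -> length w = k /\ List.Forall (fun j => (j < N)%nat) w.
Proof. revert w; induction k; simpl; intros w Hw.
  - destruct Hw as [<-|[]]. split; auto.
  - apply in_flat_map in Hw. destruct Hw as [j [Hj Hw]]. apply in_map_iff in Hw.
    destruct Hw as [w' [<- Hw']]. apply in_seq in Hj. destruct (IHk _ Hw').
    simpl. split; [lia|]. constructor; auto. lia.
Qed.

Section S.
Variables (a1 a2 : R) (N : nat) (th : nat -> R -> R).
Hypothesis Hth : forall beta x, (beta < N)%nat -> a1 < x < a2 -> a1 < th beta x < a2.

Lemma tc_H w x : List.Forall (fun j => (j < N)%nat) w -> a1 < x < a2 -> a1 < theta_comp th w x < a2.
Proof. revert x; induction w; simpl; intros x Hf Hx; auto. inversion Hf; subst.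
  apply IHw; auto. Qed.

Lemma Wt_nonneg c w x : (forall beta x, (beta < N)%nat -> a1 < x < a2 -> 0 <= c beta x) ->
  List.Forall (fun j => (j < N)%nat) w -> a1 < x < a2 -> 0 <= Wt c th w x.
Proof. intros Hc. revert x; induction w; simpl; intros x Hf Hx; [lra|]. inversion Hf; subst.
  apply Rmult_le_pos; auto. Qed.

Lemma Wt_mul c q w x : Wt (fun j y => c j y * q j y) th w x = Wt c th w x * Wt q th w x.
Proof. revert x; induction w; simpl; intros; [ring|]. rewrite IHw. ring. Qed.

Lemma iterate c lam f : 0 <= lam ->
  (forall beta x, (beta < N)%nat -> a1 < x < a2 -> 0 <= c beta x) ->
  (forall x, a1 < x < a2 -> lsum (seq 0 N) (fun beta => c beta x * f (th beta x)) <= lam * f x) ->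
  forall k x, a1 < x < a2 ->
  lsum (words N k) (fun w => Wt c th w x * f (theta_comp th w x)) <= lam ^ k * f x.
Proof. intros Hl Hc Hf k. induction k; intros x Hx.
  - simpl. lra.
  - simpl words. rewrite lsum_flat_map.
    apply Rle_trans with (lsum (seq 0 N) (fun beta => lam ^ k * (c beta x * f (th beta x)))).
    + apply lsum_le. intros j Hj. apply in_seq in Hj. rewrite lsum_map. simpl.
      assert (Hcj : 0 <= c j x) by (apply Hc; auto; lia).
      assert (Hx' : a1 < th j x < a2) by (apply Hth; auto; lia).
      specialize (IHk _ Hx').
      apply Rle_trans with (c j x * lsum (words N k) (fun w => Wt c th w (th j x) * f (theta_comp th w (th j x)))).
      * rewrite lsum_scal. apply Req_le. apply lsum_ext. intros; ring.
      * apply Rle_trans with (c j x * (lam ^ k * f (th j x))); [apply Rmult_le_compat_l; auto|].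
        right; ring.
    + rewrite <- lsum_scal. simpl. specialize (Hf x Hx).
      assert (0 <= lam ^ k) by (apply pow_le; auto).
      apply Rle_trans with (lam ^ k * (lam * f x)); [apply Rmult_le_compat_l; auto|right; ring].
Qed.

Lemma minprin c q lam kap mu v w : a1 < a2 -> 0 < lam -> 0 <= kap < 1 ->
  (forall x, a1 <= x <= a2 -> 0 < v x) ->
  (forall x, a1 <= x <= a2 -> continuity_pt v x) ->
  (forall x, a1 <= x <= a2 -> continuity_pt w x) ->
  (forall beta x, (beta < N)%nat -> a1 < x < a2 -> 0 <= c beta x) ->
  (forall beta x, (beta < N)%nat -> a1 < x < a2 -> 0 <= q beta x) ->
  (forall x, a1 < x < a2 -> lsum (seq 0 N) (fun beta => c beta x * v (th beta x)) <= lam * v x) ->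
  (forall x, a1 < x < a2 -> lsum (seq 0 N) (fun beta => (c beta x * q beta x) * w (th beta x)) <= lam * w x) ->
  (forall w, In w (words N mu) -> forall x, a1 < x < a2 -> Wt q th w x <= kap) ->
  forall x, a1 <= x <= a2 -> 0 <= w x.
Proof. intros Ha Hlam Hk Hv Hvc Hwc Hc Hq Hev Hew Hkap.
  destruct (continuity_ab_min (fun x => w x / v x) a1 a2) as [x0 [Hmin Hx0]]; [lra| |].
  { intros y Hy. apply continuity_pt_div; auto. specialize (Hv y Hy). lra. }
  set (c0 := w x0 / v x0) in *.
  assert (Hwv : forall y, a1 <= y <= a2 -> c0 * v y <= w y).
  { intros y Hy. specialize (Hmin y Hy). specialize (Hv y Hy). simpl in Hmin.
    replace (w y) with ((w y / v y) * v y) by (field; lra). apply Rmult_le_compat_r; lra. }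
  destruct (Rle_dec 0 c0) as [Hc0|Hc0].
  { intros x Hx. specialize (Hwv x Hx). specialize (Hv x Hx). nra. }
  exfalso. apply Rnot_le_lt in Hc0.
  assert (Hy : forall y, a1 < y < a2 -> kap * c0 * v y <= w y).
  { intros y Hy.
    assert (Hlm : 0 < lam ^ mu) by (apply pow_lt; auto).
    apply (Rmult_le_reg_l (lam ^ mu)); auto.
    pose proof (iterate (fun j y => c j y * q j y) lam w ltac:(lra)
       ltac:(intros; apply Rmult_le_pos; auto) Hew mu y Hy) as Iw.
    pose proof (iterate c lam v ltac:(lra) Hc Hev mu y Hy) as Iv.
    eapply Rle_trans; [|exact Iw].
    apply Rle_trans with (kap * c0 * lsum (words N mu) (fun w0 => Wt c th w0 y * v (theta_comp th w0 y))).
    - assert (kap * c0 <= 0) by nra. nra.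
    - rewrite lsum_scal. apply lsum_le. intros w0 Hw0. destruct (words_in _ _ _ Hw0) as [_ Hf].
      rewrite Wt_mul.
      assert (Hz := tc_H w0 y Hf Hy).
      assert (H1 := Wt_nonneg c w0 y Hc Hf Hy).
      assert (H2 := Wt_nonneg q w0 y Hq Hf Hy).
      assert (H3 := Hkap w0 Hw0 y Hy).
      assert (H4 := Hwv (theta_comp th w0 y) ltac:(lra)).
      assert (H5 := Hv (theta_comp th w0 y) ltac:(lra)).
      set (A := Wt c th w0 y) in *. set (Q := Wt q th w0 y) in *.
      set (V := v (theta_comp th w0 y)) in *. set (W := w (theta_comp th w0 y)) in *. clearbody A Q V W. assert (0 <= A*V) by (apply Rmult_le_pos; lra).
      assert (A * Q * W >= A * Q * (c0 * V)) by (apply Rle_ge, Rmult_le_compat_l; nra).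
      assert (A * V * c0 <= 0) by (apply Rmult_le_0_l; lra).
      assert (Q * (A * V * c0) >= kap * (A * V * c0)) by nra.
      assert (A*Q*(c0*V) = Q*(A*V*c0)) by ring.
      assert (kap*c0*(A*V) = kap*(A*V*c0)) by ring. lra. }
  assert (Hx0' : kap * c0 * v x0 <= w x0).
  { assert (0 <= w x0 - kap * c0 * v x0); [|lra].
    apply (closure_ge a1 a2 (fun y => w y - kap * c0 * v y)); auto.
    - apply continuity_pt_minus; auto. apply continuity_pt_mult; auto. apply continuity_pt_const. intros ??; auto.
    - intros y Hy'. specialize (Hy y Hy'). lra. }
  assert (w x0 = c0 * v x0) by (unfold c0; field; specialize (Hv x0 Hx0); lra).
  specialize (Hv x0 Hx0). clearbody c0. assert (0 < (1-kap)*(-c0)) by (apply Rmult_lt_0_compat; lra). nra.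
Qed.
End S.


Definition T1 (b v th : R -> R) s y :=
  Rpower (b y) s * (s * Derive b y / b y) * v (th y) + Rpower (b y) s * Derive th y * Derive v (th y).
Definition G2 (b v th : R -> R) s y :=
  Rpower (b y) s * s * (Derive_n b 2 y * b y - (1 - s) * (Derive b y) ^ 2) / (b y) ^ 2 * v (th y)
  + 2 * (Rpower (b y) s * (s * Derive b y / b y)) * Derive th y * Derive v (th y)
  + Rpower (b y) s * Derive_n th 2 y * Derive v (th y).
Definition T2 (b v th : R -> R) s y :=
  G2 b v th s y + Rpower (b y) s * (Derive th y) ^ 2 * Derive_n v 2 (th y).

Ltac etared := repeat match goal with |- context [fun x0 : R => ?f x0] => change (fun x0:R => f x0) with f end.

Lemma dT0 (b v th : R -> R) s x : 0 < b x -> ex_derive b x -> ex_derive v (th x) -> ex_derive th x ->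
  is_derive (fun y => Rpower (b y) s * v (th y)) x (T1 b v th s x).
Proof. intros. unfold T1, Rpower. auto_derive.
  - repeat split; auto; try lra.
  - match goal with |- @eq _ ?a ?b => enough (HH : (a:R) = b) by exact HH end. etared. field. lra.
Qed.

Lemma dT1 (b v th : R -> R) s x : 0 < b x -> ex_derive b x -> ex_derive (Derive b) x ->
  ex_derive v (th x) -> ex_derive (Derive v) (th x) -> ex_derive th x -> ex_derive (Derive th) x ->
  is_derive (T1 b v th s) x (T2 b v th s x).
Proof. intros. unfold T2, G2, T1, Rpower. simpl. auto_derive.
  - repeat split; auto; try lra.
  - match goal with |- @eq _ ?a ?b => enough (HH : (a:R) = b) by exact HH end. etared. field. lra.
Qed.


Lemma Cm_facts m f : (2 <= m)%nat -> Cm m f -> forall x,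
  ex_derive f x /\ ex_derive (Derive f) x /\ continuity_pt f x /\
  continuity_pt (Derive f) x /\ continuity_pt (Derive_n f 2) x.
Proof. intros Hm [H1 H2] x.
  assert (E0 : forall y, ex_derive f y) by (intros y; exact (H1 0%nat y ltac:(lia))).
  assert (E1 : forall y, ex_derive (Derive f) y) by (intros y; exact (H1 1%nat y ltac:(lia))).
  repeat split; auto.
  - apply continuity_pt_filterlim. apply (ex_derive_continuous f x); auto.
  - apply continuity_pt_filterlim. apply (ex_derive_continuous (Derive f) x); auto.
  - apply continuity_pt_filterlim. destruct (Nat.eq_dec m 2) as [->|Hn].
    + apply H2.
    + apply (ex_derive_continuous (Derive_n f 2) x). exact (H1 2%nat x ltac:(lia)).
Qed.

Lemma Lop_lsum N b th s f x :
  Lop N b th s f x = lsum (seq 0 N) (fun beta => Rpower (b beta x) s * f (th beta x)).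
Proof. reflexivity. Qed.

Lemma tc_derive N th w : (forall beta x, (beta < N)%nat -> ex_derive (th beta) x) ->
  List.Forall (fun j => (j < N)%nat) w -> forall x,
  is_derive (theta_comp th w) x (Wt (fun j y => Derive (th j) y) th w x).
Proof. intros Hd Hf. induction Hf as [|j w Hj Hf IH]; intros x; simpl.
  - unfold theta_comp; simpl. apply (is_derive_ext (fun y => y)); [reflexivity|].
    apply (is_derive_id (K:=R_AbsRing)).
  - apply (is_derive_ext (fun y => theta_comp th w (th j y))); [reflexivity|].
    pose proof (is_derive_comp (theta_comp th w) (th j) x _ _ (IH (th j x)) (Derive_correct _ _ (Hd j x Hj))) as H.
    exact H.
Qed.

Lemma Wt_sq th w x :
  Wt (fun j y => (Derive (th j) y) ^ 2) th w x = (Wt (fun j y => Derive (th j) y) th w x) ^ 2.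
Proof. revert x; induction w; simpl; intros; [ring|]. rewrite IHw. ring. Qed.

Lemma repeat_words N k : (1 <= N)%nat -> In (repeat 0%nat k) (words N k).
Proof. intros HN. induction k; simpl; auto.
  apply in_flat_map. exists 0%nat. split; [apply in_seq; lia|]. apply in_map. auto. Qed.


Theorem theorem6p5
  (a1 a2 : R) (N m : nat) (b theta : nat -> R -> R) (mu : nat) (kappa s : R)
  (Ha : a1 < a2) (HN : (1 <= N)%nat) (Hm : (2 <= m)%nat)
  (Hb_Cm : forall beta, (beta < N)%nat -> Cm m (b beta))
  (Htheta_Cm : forall beta, (beta < N)%nat -> Cm m (theta beta))
  (Hb_pos : forall beta x, (beta < N)%nat -> a1 <= x <= a2 -> 0 < b beta x)
  (Htheta_H : forall beta x, (beta < N)%nat -> a1 < x < a2 -> a1 < theta beta x < a2)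
  (Hmu : (1 <= mu)%nat) (Hkappa : kappa < 1)
  (Hcontr : forall w : list nat, length w = mu -> List.Forall (fun j => (j < N)%nat) w ->
     forall x y, a1 <= x <= a2 -> a1 <= y <= a2 ->
     Rabs (theta_comp theta w x - theta_comp theta w y) <= kappa * Rabs (x - y))
  (Hd : forall beta u, (beta < N)%nat -> a1 < u < a2 ->
     0 <= Derive (theta beta) u /\ 0 <= Derive_n (theta beta) 2 u /\
     0 <= Derive (b beta) u /\ 0 <= Derive_n (b beta) 2 u /\
     0 <= Derive_n (b beta) 2 u * b beta u - (1 - s) * (Derive (b beta) u) ^ 2)
  (Hs : 0 < s)
  (v : R -> R) (Hv_Cm : Cm m v)
  (Hv_pos : forall x, a1 <= x <= a2 -> 0 < v x)
  (Hv_eig : exists lam : R, forall x, a1 <= x <= a2 -> Lop N b theta s v x = lam * v x) :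
  (forall u, a1 <= u <= a2 -> 0 <= Derive v u /\ 0 <= Derive_n v 2 u) /\
  (forall F : R -> Prop,
     (forall u, a1 <= u <= a2 -> ~ F u -> forall beta, (beta < N)%nat ->
        0 < Derive (b beta) u /\
        0 < Derive_n (b beta) 2 u * b beta u - (1 - s) * (Derive (b beta) u) ^ 2) ->
     forall u, a1 <= u <= a2 -> ~ F u -> 0 < Derive v u /\ 0 < Derive_n v 2 u).
Proof.
  destruct Hv_eig as [lam Heig].
  pose proof (Cm_facts m v Hm Hv_Cm) as Vf.
  pose proof (fun beta Hb => Cm_facts m (b beta) Hm (Hb_Cm beta Hb)) as Bf.
  pose proof (fun beta Hb => Cm_facts m (theta beta) Hm (Htheta_Cm beta Hb)) as Tf.
  assert (Hseq : forall beta, In beta (seq 0 N) -> (beta < N)%nat) by (intros beta H; apply in_seq in H; lia).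
  assert (Hne : seq 0 N <> []) by (destruct N; [lia|discriminate]).
  assert (Rp : forall x y, 0 < Rpower x y) by (intros; apply exp_pos).
  assert (Hlam : 0 < lam).
  { set (xm := (a1 + a2) / 2). assert (Hxm : a1 <= xm <= a2) by (unfold xm; lra).
    specialize (Heig xm Hxm). rewrite Lop_lsum in Heig.
    assert (0 < lsum (seq 0 N) (fun beta => Rpower (b beta xm) s * v (theta beta xm))).
    { apply lsum_pos; auto. intros beta Hb. apply Rmult_lt_0_compat; auto.
      apply Hv_pos. assert (a1 < theta beta xm < a2) by (apply Htheta_H; auto; unfold xm; lra). lra. }
    specialize (Hv_pos xm Hxm). nra. }
  assert (D1 : forall x, a1 <= x <= a2 -> lam * Derive v x = lsum (seq 0 N) (fun beta => T1 (b beta) v (theta beta) s x)).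
  { intros x Hx. symmetry.
    assert (HA : derivable_pt_lim (fun y => lsum (seq 0 N) (fun beta => Rpower (b beta y) s * v (theta beta y))) x
       (lsum (seq 0 N) (fun beta => T1 (b beta) v (theta beta) s x))).
    { apply (proj1 (is_derive_Reals _ _ _)). apply (is_derive_lsum (seq 0 N) (fun beta y => Rpower (b beta y) s * v (theta beta y))).
      intros beta Hb. apply Hseq in Hb. apply dT0.
      + apply Hb_pos; auto.
      + apply (Bf beta Hb x).
      + apply (Vf (theta beta x)).
      + apply (Tf beta Hb x). }
    assert (HB : derivable_pt_lim (fun y => lam * v y) x (lam * Derive v x)).
    { apply (proj1 (is_derive_Reals _ _ _)). destruct (Vf x) as [E _]. auto_derive; auto. etared. ring. }
    refine (deriv_eq a1 a2 _ _ x _ _ Ha Hx _ HA HB).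
    intros y Hy. rewrite <- Lop_lsum. auto. }
  assert (D2 : forall x, a1 <= x <= a2 -> lam * Derive_n v 2 x = lsum (seq 0 N) (fun beta => T2 (b beta) v (theta beta) s x)).
  { intros x Hx. symmetry.
    assert (HA : derivable_pt_lim (fun y => lsum (seq 0 N) (fun beta => T1 (b beta) v (theta beta) s y)) x
       (lsum (seq 0 N) (fun beta => T2 (b beta) v (theta beta) s x))).
    { apply (proj1 (is_derive_Reals _ _ _)). apply (is_derive_lsum (seq 0 N) (fun beta y => T1 (b beta) v (theta beta) s y)).
      intros beta Hb. apply Hseq in Hb. apply dT1.
      + apply Hb_pos; auto.
      + apply (Bf beta Hb x).
      + apply (Bf beta Hb x).
      + apply (Vf (theta beta x)).
      + apply (Vf (theta beta x)).
      + apply (Tf beta Hb x).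
      + apply (Tf beta Hb x). }
    assert (HB : derivable_pt_lim (fun y => lam * Derive v y) x (lam * Derive_n v 2 x)).
    { apply (proj1 (is_derive_Reals _ _ _)). destruct (Vf x) as [_ [E _]]. change (Derive_n v 2 x) with (Derive (Derive v) x). auto_derive; auto. etared. ring. }
    refine (deriv_eq a1 a2 _ _ x _ _ Ha Hx _ HA HB).
    intros y Hy. rewrite D1; auto. }

  assert (Thc : forall beta u, (beta < N)%nat -> a1 <= u <= a2 ->
     (a1 <= theta beta u <= a2) /\ 0 <= Derive (theta beta) u /\ 0 <= Derive_n (theta beta) 2 u).
  { intros beta u Hb Hu. destruct (Tf beta Hb u) as [_ [_ [C0 [C1 C2]]]]. split; [split|split].
    - apply (closure_ge a1 a2 (theta beta) u a1 Ha Hu C0). intros y Hy. pose proof (Htheta_H beta y Hb Hy); lra.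
    - apply (closure_le a1 a2 (theta beta) u a2 Ha Hu C0). intros y Hy. pose proof (Htheta_H beta y Hb Hy); lra.
    - apply (closure_ge a1 a2 (Derive (theta beta)) u 0 Ha Hu C1). intros y Hy. apply (Hd beta y Hb Hy).
    - apply (closure_ge a1 a2 (Derive_n (theta beta) 2) u 0 Ha Hu C2). intros y Hy. apply (Hd beta y Hb Hy). }
  assert (Hkap1 : forall w, In w (words N mu) -> forall x, a1 < x < a2 ->
     0 <= Wt (fun j y => Derive (theta j) y) theta w x <= kappa).
  { intros w Hw x Hx. destruct (words_in _ _ _ Hw) as [Hl Hf]. split.
    - apply (Wt_nonneg a1 a2 N theta Htheta_H); auto. intros; apply Hd; auto.
    - pose proof (tc_derive N theta w (fun beta y Hb => proj1 (Tf beta Hb y)) Hf x) as HD.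
      apply (proj1 (is_derive_Reals _ _ _)) in HD.
      assert (Rabs (Wt (fun j y => Derive (theta j) y) theta w x) <= kappa).
      { apply (deriv_lip a1 a2 (theta_comp theta w) x _ kappa Ha ltac:(lra)); auto.
        intros y Hy. apply Hcontr; auto; lra. }
      pose proof (Rle_abs (Wt (fun j y => Derive (theta j) y) theta w x)). lra. }
  assert (Hk0 : 0 <= kappa).
  { pose proof (Hkap1 _ (repeat_words N mu HN) ((a1+a2)/2) ltac:(lra)). lra. }
  assert (Hev : forall x, a1 < x < a2 ->
     lsum (seq 0 N) (fun beta => Rpower (b beta x) s * v (theta beta x)) <= lam * v x).
  { intros x Hx. rewrite <- Lop_lsum. rewrite Heig; lra. }
  assert (Hc0 : forall beta x, (beta < N)%nat -> a1 < x < a2 -> 0 <= Rpower (b beta x) s).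
  { intros. apply Rlt_le, Rp. }
  assert (Hdiv : forall beta x, (beta < N)%nat -> a1 <= x <= a2 -> 0 <= Derive (b beta) x -> 0 <= s * Derive (b beta) x / b beta x).
  { intros beta x Hb Hx H. unfold Rdiv. apply Rmult_le_pos; [apply Rmult_le_pos; lra|].
    apply Rlt_le, Rinv_0_lt_compat, Hb_pos; auto. }
  assert (W1 : forall x, a1 <= x <= a2 -> 0 <= Derive v x).
  { apply (minprin a1 a2 N theta Htheta_H (fun j y => Rpower (b j y) s) (fun j y => Derive (theta j) y) lam kappa mu v (Derive v)); auto.
    - intros x Hx; apply Vf.
    - intros x Hx; apply Vf.
    - intros; apply Hd; auto.
    - intros x Hx. apply (Rmult_le_reg_l 1); [lra|]. rewrite Rmult_1_l.
      replace (1 * (lam * Derive v x)) with (lam * Derive v x) by ring.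
      rewrite D1 by lra. apply lsum_le. intros beta Hb. apply Hseq in Hb. unfold T1.
      pose proof (Rp (b beta x) s). pose proof (Hdiv beta x Hb ltac:(lra) (proj1 (proj2 (proj2 (Hd beta x Hb Hx))))).
      assert (0 < v (theta beta x)) by (apply Hv_pos; pose proof (Htheta_H beta x Hb Hx); lra).
      assert (0 <= Rpower (b beta x) s * (s * Derive (b beta) x / b beta x) * v (theta beta x)).
      { apply Rmult_le_pos; [apply Rmult_le_pos|]; lra. }
      lra.
    - intros w Hw x Hx. apply (Hkap1 w Hw x Hx). }
  assert (W2 : forall x, a1 <= x <= a2 -> 0 <= Derive_n v 2 x).
  { apply (minprin a1 a2 N theta Htheta_H (fun j y => Rpower (b j y) s) (fun j y => (Derive (theta j) y) ^ 2) lam (kappa ^ 2) mu v (Derive_n v 2)); auto.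
    - split; [apply pow_le; auto|]. simpl. nra.
    - intros x Hx; apply Vf.
    - intros x Hx; apply Vf.
    - intros; apply pow2_ge_0.
    - intros x Hx. rewrite D2 by lra. apply lsum_le. intros beta Hb. apply Hseq in Hb. unfold T2, G2.
      destruct (Hd beta x Hb Hx) as [E1 [E2 [E3 [E4 E5]]]].
      pose proof (Rp (b beta x) s). pose proof (Hdiv beta x Hb ltac:(lra) E3).
      assert (Hth : a1 <= theta beta x <= a2) by (pose proof (Htheta_H beta x Hb Hx); lra).
      assert (0 < v (theta beta x)) by (apply Hv_pos; auto).
      pose proof (W1 _ Hth).
      assert (0 < b beta x) by (apply Hb_pos; auto; lra).
      assert (0 <= Rpower (b beta x) s * s * (Derive_n (b beta) 2 x * b beta x - (1 - s) * Derive (b beta) x ^ 2) / b beta x ^ 2 * v (theta beta x)).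
      { apply Rmult_le_pos; [|lra]. unfold Rdiv. apply Rmult_le_pos.
        - apply Rmult_le_pos; [apply Rmult_le_pos|]; lra.
        - apply Rlt_le, Rinv_0_lt_compat, pow_lt; auto. }
      assert (0 <= 2 * (Rpower (b beta x) s * (s * Derive (b beta) x / b beta x)) * Derive (theta beta) x * Derive v (theta beta x)).
      { apply Rmult_le_pos; [apply Rmult_le_pos; [apply Rmult_le_pos; [lra| apply Rmult_le_pos; lra]|lra]|lra]. }
      assert (0 <= Rpower (b beta x) s * Derive_n (theta beta) 2 x * Derive v (theta beta x)).
      { repeat apply Rmult_le_pos; lra. }
      lra.
    - intros w Hw x Hx. rewrite Wt_sq. destruct (Hkap1 w Hw x Hx). simpl. nra. }
  split.
  { intros u Hu; split; auto. }
  intros F HF u Hu HFu.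
  assert (Hterm : forall beta, (beta < N)%nat ->
     0 < Rpower (b beta u) s * (s * Derive (b beta) u / b beta u) * v (theta beta u) /\
     0 <= Rpower (b beta u) s * Derive (theta beta) u * Derive v (theta beta u) /\
     0 < Rpower (b beta u) s * s * (Derive_n (b beta) 2 u * b beta u - (1 - s) * Derive (b beta) u ^ 2) / b beta u ^ 2 * v (theta beta u) /\
     0 <= 2 * (Rpower (b beta u) s * (s * Derive (b beta) u / b beta u)) * Derive (theta beta) u * Derive v (theta beta u) /\
     0 <= Rpower (b beta u) s * Derive_n (theta beta) 2 u * Derive v (theta beta u) /\
     0 <= Rpower (b beta u) s * Derive (theta beta) u ^ 2 * Derive_n v 2 (theta beta u)).
  { intros beta Hb. destruct (HF u Hu HFu beta Hb) as [S1 S2].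
    destruct (Thc beta u Hb Hu) as [Hth [E1 E2]].
    pose proof (Rp (b beta u) s).
    assert (0 < b beta u) by (apply Hb_pos; auto).
    assert (0 < s * Derive (b beta) u / b beta u).
    { unfold Rdiv. apply Rmult_lt_0_compat; [apply Rmult_lt_0_compat; lra|]. apply Rinv_0_lt_compat; auto. }
    assert (0 < v (theta beta u)) by (apply Hv_pos; auto).
    pose proof (W1 _ Hth). pose proof (W2 _ Hth).
    repeat split.
    - apply Rmult_lt_0_compat; [apply Rmult_lt_0_compat|]; lra.
    - repeat apply Rmult_le_pos; lra.
    - apply Rmult_lt_0_compat; [|lra]. unfold Rdiv. apply Rmult_lt_0_compat.
      + apply Rmult_lt_0_compat; [apply Rmult_lt_0_compat|]; lra.
      + apply Rinv_0_lt_compat, pow_lt; auto.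
    - apply Rmult_le_pos; [apply Rmult_le_pos; [apply Rmult_le_pos; [lra| apply Rmult_le_pos; lra]|lra]|lra].
    - repeat apply Rmult_le_pos; lra.
    - apply Rmult_le_pos; [apply Rmult_le_pos|]; try lra. apply pow2_ge_0. }
  split.
  - assert (0 < lam * Derive v u); [|nra].
    rewrite D1 by auto. apply lsum_pos; auto. intros beta Hb. apply Hseq in Hb.
    destruct (Hterm beta Hb) as [P1 [P2 _]]. unfold T1. lra.
  - assert (0 < lam * Derive_n v 2 u); [|nra].
    rewrite D2 by auto. apply lsum_pos; auto. intros beta Hb. apply Hseq in Hb.
    destruct (Hterm beta Hb) as [_ [_ [P3 [P4 [P5 P6]]]]]. unfold T2, G2. lra.
Qed.
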